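(* Let $S$ be a $0$-left cancellative semigroup which is categorical at zero, let $r\in S$, and let $\sigma$ be a maximal string with $\sigma\cap rS\neq\emptyset$. Then $r^{-1}*\sigma=\{t\in S: rt\in\sigma\}$ is a maximal string.
   Context: $S$ has zero $0$; $0$-left cancellative: $st=sr\neq0\Rightarrow t=r$; categorical at zero: $rs\neq0$ and $st\neq0$ imply $rst\neq0$. Let $\tilde S=S\cup\{1\}$ with $1$ an adjoined identity; for $s,t\in S$, $s\mid t$ means $t\in s\tilde S$. A string is a nonempty $\sigma\subseteq S$ such that (i) $0\notin\sigma$; (ii) if $s\mid t$ and $t\in\sigma$ then $s\in\sigma$; (iii) for all $s_1,s_2\in\sigma$ there is $s\in\sigma$ with $s_1\mid s$ and $s_2\mid s$. A string is maximal if it is not properly contained in another string. *)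

(* Defs.v *)
Section Defs.
Variables (S : Type) (mul : S -> S -> S) (z : S).

Definition semigroup_with_zero : Prop :=
  (forall x y w, mul x (mul y w) = mul (mul x y) w) /\
  (forall x, mul z x = z) /\ (forall x, mul x z = z).

Definition zero_left_cancellative : Prop :=
  forall s t r, mul s t = mul s r -> mul s t <> z -> t = r.

Definition categorical_at_zero : Prop :=
  forall r s t, mul r s <> z -> mul s t <> z -> mul (mul r s) t <> z.

(* s | t  iff  t in s S~, with S~ = S + adjoined identity *)
Definition sdivides (s t : S) : Prop := t = s \/ exists u, t = mul s u.

Definition is_string (sigma : S -> Prop) : Prop :=
  (exists s, sigma s) /\
  ~ sigma z /\
  (forall s t, sdivides s t -> sigma t -> sigma s) /\
  (forall s1 s2, sigma s1 -> sigma s2 ->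
     exists s, sigma s /\ sdivides s1 s /\ sdivides s2 s).

Definition is_maximal_string (sigma : S -> Prop) : Prop :=
  is_string sigma /\
  forall tau, is_string tau -> (forall x, sigma x -> tau x) ->
    forall x, tau x -> sigma x.

End Defs.
Arguments semigroup_with_zero {S}.
Arguments zero_left_cancellative {S}.
Arguments categorical_at_zero {S}.
Arguments sdivides {S}.
Arguments is_string {S}.
Arguments is_maximal_string {S}.

(* Main.v *)
Require Import Defs.

Section H.
Variables (S : Type) (mul : S -> S -> S) (z : S).
Hypothesis hS : semigroup_with_zero mul z.

Lemma sd_refl x : sdivides mul x x.
Proof. left; reflexivity. Qed.

Lemma sd_trans x y w : sdivides mul x y -> sdivides mul y w -> sdivides mul x w.
Proof.
  destruct hS as [hA _].
  intros [->|[u ->]] [->|[v ->]]; unfold sdivides.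
  - left; reflexivity.
  - right; exists v; reflexivity.
  - right; exists u; reflexivity.
  - right; exists (mul u v); rewrite hA; reflexivity.
Qed.

Lemma sd_mul r x y : sdivides mul x y -> sdivides mul (mul r x) (mul r y).
Proof.
  destruct hS as [hA _].
  intros [->|[u ->]]; [left; reflexivity| right; exists u; apply hA].
Qed.
End H.

Theorem proposition10p20 (S : Type) (mul : S -> S -> S) (z : S)
  (hS : semigroup_with_zero mul z)
  (hcanc : zero_left_cancellative mul z)
  (hcat : categorical_at_zero mul z)
  (r : S) (sigma : S -> Prop)
  (hmax : is_maximal_string mul z sigma)
  (hmeet : exists t, sigma (mul r t)) :
  is_maximal_string mul z (fun t => sigma (mul r t)).
Proof.
  pose proof hS as [hA [hz1 hz2]].
  destruct hmax as [[hne [hnz [hher hdir]]] hmx].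
  destruct hmeet as [t0 Ht0].
  assert (Hstr : is_string mul z (fun t => sigma (mul r t))).
  { split; [exists t0; exact Ht0|]. split; [rewrite hz2; exact hnz|]. split.
    - intros s t Hd Ht. apply (hher _ (mul r t)); [apply (sd_mul _ _ _ hS); auto|exact Ht].
    - intros s1 s2 H1 H2. destruct (hdir _ _ H1 H2) as [s [Hs [D1 D2]]].
      assert (Ea : exists a, s = mul r a /\ sdivides mul s1 a).
      { destruct D1 as [->|[u ->]].
        - exists s1; split; [reflexivity|apply (sd_refl _ mul)].
        - exists (mul s1 u); split; [symmetry; apply hA| right; exists u; reflexivity]. }
      assert (Eb : exists b, s = mul r b /\ sdivides mul s2 b).
      { destruct D2 as [->|[u ->]].
        - exists s2; split; [reflexivity|apply (sd_refl _ mul)].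
        - exists (mul s2 u); split; [symmetry; apply hA| right; exists u; reflexivity]. }
      destruct Ea as [a [Ea Da]]; destruct Eb as [b [Eb Db]].
      assert (a = b).
      { apply (hcanc r); [congruence| intro E; apply hnz; congruence]. }
      subst b. exists a; split; [rewrite <- Ea; exact Hs|split; auto]. }
  split; [exact Hstr|].
  intros tau Htau Hsub.
  destruct Htau as [_ [tnz [ther tdir]]].
  set (rho := fun x => exists t, tau t /\ sdivides mul x (mul r t)).
  assert (Hrho : is_string mul z rho).
  { split; [| split; [| split]].
    - destruct hne as [x Hx]. exists (mul r t0). exists t0; split; [apply Hsub; exact Ht0|apply (sd_refl _ mul)].
    - intros [t [Ht Hd]].
      assert (Hrt : mul r t = z).
      { destruct Hd as [E|[u E]]; [auto| rewrite E; apply hz1]. }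
      destruct (tdir _ _ Ht (Hsub _ Ht0)) as [s [Hs [Dt Dt0]]].
      assert (Hrs : mul r s = z).
      { destruct Dt as [->|[w ->]]; [auto| rewrite hA, Hrt; apply hz1]. }
      destruct Dt0 as [E|[v E]]; subst s.
      + apply hnz; rewrite <- Hrs; exact Ht0.
      + apply (hcat r t0 v); [intro E; apply hnz; rewrite <- E; exact Ht0
                            | intro E; apply tnz; rewrite <- E; exact Hs
                            | rewrite <- hA; exact Hrs].
    - intros s x Dsx [t [Ht Dx]]. exists t; split; auto. eapply (sd_trans _ _ _ hS); eauto.
    - intros x1 x2 [t1 [H1 D1]] [t2 [H2 D2]].
      destruct (tdir _ _ H1 H2) as [t [Ht [E1 E2]]].
      exists (mul r t); split; [exists t; split; [auto|apply (sd_refl _ mul)]|split].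
      + eapply (sd_trans _ _ _ hS); eauto. apply (sd_mul _ _ _ hS); auto.
      + eapply (sd_trans _ _ _ hS); eauto. apply (sd_mul _ _ _ hS); auto. }
  assert (Hsr : forall x, sigma x -> rho x).
  { intros x Hx. destruct (hdir _ _ Hx Ht0) as [s [Hs [Dx Dr]]].
    assert (Ea : exists a, s = mul r a).
    { destruct Dr as [->|[u ->]]; [exists t0; reflexivity| exists (mul t0 u); symmetry; apply hA]. }
    destruct Ea as [a ->]. exists a; split; auto. }
  intros x Hx. apply (hmx rho Hrho Hsr). exists x; split; [auto|apply (sd_refl _ mul)].
Qed.
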